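(* Every multiplicative generalized seminorm $\mathbb{Z}\to R$ with $R$ of tempered growth is multiplicatively equivalent to one of the following: the $p$-adic seminorm $|\cdot|_p$ for a prime $p$; the $p$-residual seminorm $|\cdot|_{p,0}$ for a prime $p$; the trivial norm $|\cdot|_0$; the archimedean norm $|\cdot|_\infty$. Thus $$\mathrm{Speh}^m(\mathbb{Z})=\{|\cdot|_p,|\cdot|_{p,0}: p\text{ prime}\}\cup\{|\cdot|_0\}\cup\{|\cdot|_\infty\}.$$ Moreover, the natural map $\mathcal{M}(\mathbb{Z})\to\mathrm{Speh}^m(\mathbb{Z})$, sending a multiplicative $\mathbb{R}_+$-valued seminorm to its multiplicative equivalence class, is surjective.
   Context: Halo: commutative unital semiring with a partial order compatible with $+$ and $\cdot$; halo morphism: increasing $f$ with $f(0)=0,f(1)=1$, $f(a+b)\le f(a)+f(b)$, $f(ab)\le f(a)f(b)$; rings carry the trivial order. An aura is a halo whose semiring is a semifield; positive means $0<1$. A generalized seminorm on a ring $A$ is a halo morphism to a positive totally ordered aura $R$; multiplicative if $|ab|=|a||b|$; tempered if $R$ has tempered growth: for every non-zero $P\in\mathbb{N}[X]$ and $x\in R$, ($x^n\le P(n)$ for all $n$) implies $x\le1$. Two seminorms $|\cdot|_1,|\cdot|_2$ on $A$ are multiplicatively equivalent if for all $a,b,c\in A$: $|a|_1|c|_1\le|b|_1\iff|a|_2|c|_2\le|b|_2$. A place is a multiplicative equivalence class of generalized seminorms; $\mathrm{Speh}^m(A)$ is the set of places represented by tempered multiplicative seminorms. $\mathcal{M}(\mathbb{Z})$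 is the set of multiplicative seminorms $\mathbb{Z}\to\mathbb{R}_+$ (with usual order; $\mathbb{R}_+$ has tempered growth). Here $|n|_p=p^{-\mathrm{ord}_p(n)}$ ($|0|_p=0$); $|n|_{p,0}=0$ if $p\mid n$ and $1$ otherwise, valued in $\{0,1\}$ with $1+1=1$; $|n|_0=1$ for $n\neq0$, $|0|_0=0$; $|n|_\infty=\max(n,-n)$. *)

(* Defs.v *)
From mathcomp Require Import all_boot all_order all_algebra.
From mathcomp Require Import Rstruct.
From Stdlib Require Import Rdefinitions.
Import Order.TTheory GRing.Theory Num.Theory.
Notation RR := Rdefinitions.R.
Local Open Scope ring_scope.

Record TOAura : Type := {
  A_car :> Type;
  A_zero : A_car;
  A_one : A_car;
  A_add : A_car -> A_car -> A_car;
  A_mul : A_car -> A_car -> A_car;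
  A_le : A_car -> A_car -> Prop;
  A_addA : forall a b c, A_add a (A_add b c) = A_add (A_add a b) c;
  A_addC : forall a b, A_add a b = A_add b a;
  A_add0 : forall a, A_add A_zero a = a;
  A_mulA : forall a b c, A_mul a (A_mul b c) = A_mul (A_mul a b) c;
  A_mulC : forall a b, A_mul a b = A_mul b a;
  A_mul1 : forall a, A_mul A_one a = a;
  A_mulDl : forall a b c, A_mul (A_add a b) c = A_add (A_mul a c) (A_mul b c);
  A_mul0 : forall a, A_mul A_zero a = A_zero;
  A_one_neq0 : A_one <> A_zero;
  A_inv : forall a, a <> A_zero -> exists b, A_mul a b = A_one;
  A_le_refl : forall a, A_le a a;
  A_le_trans : forall a b c, A_le a b -> A_le b c -> A_le a c;
  A_le_anti : forall a b, A_le a b -> A_le b a -> a = b;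
  A_le_total : forall a b, A_le a b \/ A_le b a;
  A_le_add : forall a b c, A_le a b -> A_le (A_add a c) (A_add b c);
  A_le_mul : forall a b c, A_le a b -> A_le (A_mul a c) (A_mul b c);
  A_pos : A_le A_zero A_one
}.

Definition A_nat (R : TOAura) (n : nat) : R := iter n (A_add R (A_one R)) (A_zero R).
Definition A_pow (R : TOAura) (x : R) (n : nat) : R := iter n (A_mul R x) (A_one R).
(* evaluation in R at n of P = a_0 + a_1 X + ... in N[X], given by its coefficient list *)
Definition A_evalP (R : TOAura) (P : seq nat) (n : nat) : R :=
  foldr (fun a acc => A_add R (A_nat R a) (A_mul R (A_nat R n) acc)) (A_zero R) P.

Definition tempered (R : TOAura) : Prop :=
  forall (P : seq nat) (x : R), has (fun a => a != 0%N) P ->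
    (forall n : nat, A_le R (A_pow R x n) (A_evalP R P n)) -> A_le R x (A_one R).

(* generalized seminorm Z -> R: halo morphism (Z carries the trivial order, so
   monotonicity is vacuous) *)
Definition gen_seminorm (R : TOAura) (s : int -> R) : Prop :=
  s (0 : int) = A_zero R /\ s (1 : int) = A_one R /\
  (forall a b : int, A_le R (s (a + b)) (A_add R (s a) (s b))) /\
  (forall a b : int, A_le R (s (a * b)) (A_mul R (s a) (s b))).

Definition multiplicative (R : TOAura) (s : int -> R) : Prop :=
  forall a b : int, s (a * b) = A_mul R (s a) (s b).

Definition mequiv {T1 T2 : Type}
  (m1 : T1 -> T1 -> T1) (l1 : T1 -> T1 -> Prop) (f1 : int -> T1)
  (m2 : T2 -> T2 -> T2) (l2 : T2 -> T2 -> Prop) (f2 : int -> T2) : Prop :=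
  forall a b c : int, l1 (m1 (f1 a) (f1 c)) (f1 b) <-> l2 (m2 (f2 a) (f2 c)) (f2 b).

Definition Rmul : RR -> RR -> RR := fun x y => x * y.
Definition Rle_ : RR -> RR -> Prop := fun x y => x <= y.
(* {0,1} with 1 + 1 = 1 (booleans: false = 0, true = 1), 0 < 1 *)
Definition Bmul : bool -> bool -> bool := andb.
Definition Ble : bool -> bool -> Prop := fun x y => (x ==> y) = true.

Definition padic (p : nat) (n : int) : RR :=
  if n == 0 then 0 else ((p%:R : RR) ^- (logn p (absz n))).
Definition presidual (p : nat) (n : int) : bool := ~~ dvdn p (absz n).
Definition trivnorm (n : int) : RR := if n == 0 then 0 else 1.
Definition archnorm (n : int) : RR := Num.max (n%:~R : RR) (- n%:~R : RR).

Definition in_Speh_m {T : Type} (m : T -> T -> T) (l : T -> T -> Prop) (f : int -> T) : Prop :=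
  exists (R : TOAura) (s : int -> R),
    tempered R /\ gen_seminorm R s /\ multiplicative R s /\ mequiv (A_mul R) (A_le R) s m l f.

Definition in_MZ (f : int -> RR) : Prop :=
  (forall n, 0 <= f n) /\ f (0 : int) = 0 /\ f (1 : int) = 1 /\
  (forall a b, f (a + b) <= f a + f b) /\
  (forall a b, f (a * b) = f a * f b).

(* Main.v *)
From Pilot Require Import Defs.
From mathcomp Require Import all_boot all_order all_algebra.
From mathcomp Require Import Rstruct zify lra.
From Stdlib Require Import Rdefinitions Classical.
Import Order.TTheory GRing.Theory Num.Theory.
Import ssrnat.
Delimit Scope nat_scope with N.

Section Aura.
Variable R : TOAura.
Declare Scope aura_scope.
Local Notation "0" := (A_zero R) : aura_scope.
Local Notation "1" := (A_one R) : aura_scope.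
Local Notation "a + b" := (A_add R a b) : aura_scope.
Local Notation "a * b" := (A_mul R a b) : aura_scope.
Local Notation "a <= b" := (A_le R a b) : aura_scope.
Local Open Scope aura_scope.

Lemma Ale0 x : 0 <= x.
Proof. have := A_le_mul R _ _ x (A_pos R). by rewrite A_mul0 A_mul1. Qed.

Lemma Amulr1 x : x * 1 = x.
Proof. by rewrite A_mulC A_mul1. Qed.
Lemma Amulr0 x : x * 0 = 0.
Proof. by rewrite A_mulC A_mul0. Qed.
Lemma Aaddr0 x : x + 0 = x.
Proof. by rewrite A_addC A_add0. Qed.
Lemma AmulDr a b c : c * (a + b) = c * a + c * b.
Proof. by rewrite A_mulC A_mulDl !(A_mulC R c). Qed.

Lemma Ale_mull a b c : a <= b -> c * a <= c * b.
Proof. by move=> h; rewrite !(A_mulC R c); apply: A_le_mul. Qed.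
Lemma Ale_addl a b c : a <= b -> c + a <= c + b.
Proof. by move=> h; rewrite !(A_addC R c); apply: A_le_add. Qed.
Lemma Ale_mul2 a b c d : a <= b -> c <= d -> a * c <= b * d.
Proof. move=> h1 h2; apply: A_le_trans (A_le_mul _ _ _ _ h1) (Ale_mull _ _ _ h2). Qed.
Lemma Ale_add2 a b c d : a <= b -> c <= d -> a + c <= b + d.
Proof. move=> h1 h2; apply: A_le_trans (A_le_add _ _ _ _ h1) (Ale_addl _ _ _ h2). Qed.
Lemma Ale_addr a b : a <= a + b.
Proof. have := Ale_addl _ _ a (Ale0 b). by rewrite Aaddr0. Qed.

Lemma Ainv a : a <> 0 -> exists b, a * b = 1.
Proof. exact: A_inv. Qed.

Lemma Amul_eq0 a b : a * b = 0 -> a = 0 \/ b = 0.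
Proof.
move=> h; case: (classic (a = 0)) => [|ha]; first by left.
right; have [y hy] := Ainv _ ha.
by rewrite -(A_mul1 R b) -hy (A_mulC R a) -A_mulA h Amulr0.
Qed.

Lemma Acancel a b c : c <> 0 -> a * c <= b * c -> a <= b.
Proof.
move=> hc h; have [y hy] := Ainv _ hc.
have := A_le_mul _ _ _ y h; by rewrite -!A_mulA hy !Amulr1.
Qed.

Lemma A10 : ~ (1 <= 0).
Proof. move=> h; apply: (A_one_neq0 R); apply: A_le_anti h (A_pos R). Qed.

Lemma ApowS x n : A_pow R x n.+1 = x * A_pow R x n.
Proof. by []. Qed.
Lemma Apow0 x : A_pow R x 0 = 1.
Proof. by []. Qed.
Lemma ApowD x (m n : nat) : A_pow R x (addn m n) = A_pow R x m * A_pow R x n.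
Proof. elim: m => [|m IH]; first by rewrite A_mul1. by rewrite addSn !ApowS IH A_mulA. Qed.
Lemma ApowM x y n : A_pow R (x * y) n = A_pow R x n * A_pow R y n.
Proof.
elim: n => [|n IH]; first by rewrite Apow0 A_mul1.
rewrite !ApowS IH -!A_mulA; congr (_ * _); rewrite !A_mulA; congr (_ * _); exact: A_mulC.
Qed.
Lemma ApowMn x (m n : nat) : A_pow R x (muln m n) = A_pow R (A_pow R x m) n.
Proof. elim: n => [|n IH]; first by rewrite muln0. by rewrite mulnS ApowD IH. Qed.
Lemma Apow1 n : A_pow R 1 n = 1.
Proof. elim: n => // n IH; by rewrite ApowS IH A_mul1. Qed.
Lemma Apow_le x y n : x <= y -> A_pow R x n <= A_pow R y n.
Proof. move=> h; elim: n => [|n IH]; first exact: A_le_refl. by rewrite !ApowS; apply: Ale_mul2. Qed.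
Lemma Apow_ge1 x n : 1 <= x -> 1 <= A_pow R x n.
Proof. move=> h; rewrite -(Apow1 n); exact: Apow_le. Qed.
Lemma Apow_le1 x n : x <= 1 -> A_pow R x n <= 1.
Proof. move=> h; rewrite -(Apow1 n); exact: Apow_le. Qed.
Lemma Apow_neq0 x n : x <> 0 -> A_pow R x n <> 0.
Proof.
move=> hx; elim: n => [|n IH]; first exact: A_one_neq0.
by rewrite ApowS => /Amul_eq0 [].
Qed.

Lemma AnatS n : A_nat R n.+1 = 1 + A_nat R n.
Proof. by []. Qed.
Lemma AnatD (m n : nat) : A_nat R (addn m n) = A_nat R m + A_nat R n.
Proof. elim: m => [|m IH]; first by rewrite A_add0. by rewrite addSn !AnatS IH A_addA. Qed.
Lemma AnatM (m n : nat) : A_nat R (muln m n) = A_nat R m * A_nat R n.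
Proof.
elim: m => [|m IH]; first by rewrite A_mul0.
by rewrite mulSn AnatD IH AnatS A_mulDl A_mul1.
Qed.
Lemma Anat_le m n : leq m n -> A_nat R m <= A_nat R n.
Proof. move=> h; rewrite -(subnKC h) AnatD; exact: Ale_addr. Qed.
Lemma Anat1 : A_nat R 1 = 1.
Proof. by rewrite AnatS Aaddr0. Qed.

Lemma AevalP2 (a b k : nat) : A_evalP R [:: a; b] k = A_nat R (addn a (muln b k)).
Proof.
rewrite /A_evalP /= Amulr0 Aaddr0 AnatD AnatM; congr (_ + _); exact: A_mulC.
Qed.
Lemma AevalP1 a k : A_evalP R [:: a] k = A_nat R a.
Proof. by rewrite /A_evalP /= Amulr0 Aaddr0. Qed.

Lemma Apow_strict t i j : t <> 0 -> ~ (1 <= t) ->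
  (A_pow R t i <= A_pow R t j <-> leq j i).
Proof.
move=> h0 h1; have t1 : t <= 1 by case: (A_le_total R t 1) => // /h1.
split.
  move=> h; case: (leqP j i) => // lt.
  move: h; rewrite -(subnKC (ltnW lt)) ApowD -{1}(Amulr1 (A_pow R t i)) => h.
  rewrite A_mulC [X in _ <= X]A_mulC in h.
  have := Acancel _ _ _ (Apow_neq0 _ i h0) h.
  rewrite -(subnSK lt) ApowS => h2; exfalso; apply: h1.
  apply: A_le_trans h2 _; rewrite -[X in _ <= X](Amulr1 t); apply: Ale_mull; exact: Apow_le1.
move=> h; rewrite -(subnKC h) ApowD -[X in _ <= X](Amulr1 (A_pow R t j)).
apply: Ale_mull; exact: Apow_le1.
Qed.

End Aura.
Local Open Scope ring_scope.

Lemma PoszX (n k : nat) : Posz (n ^ k)%N = (Posz n) ^+ k.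
Proof. elim: k => [|k IH]; first by rewrite expn0 expr0. by rewrite expnS exprS PoszM IH. Qed.

Lemma leq_pow2 (a b e : nat) : (a <= b)%N -> (a ^ e <= b ^ e)%N.
Proof. move=> h; elim: e => [|e IH] //; rewrite !expnS; exact: leq_mul. Qed.

Lemma natpow_aux x n : (x ^ n * (x + n) <= x * (x + 1) ^ n)%N.
Proof.
elim: n => [|n IH]; first by rewrite expn0 mul1n addn0 muln1.
rewrite !expnS. set P := (x ^ n)%N in IH *. set Q := ((x + 1) ^ n)%N in IH *. nia.
Qed.

Lemma pow_gap X y : (0 < X)%N -> (X < y)%N -> exists A, (X ^ A.+1 <= y ^ A)%N.
Proof.
move=> X0 Xy; exists (X * (X - 1))%N.
apply: (@leq_trans ((X + 1) ^ (X * (X - 1)))%N); last first.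
  apply: leq_pow2; by rewrite addn1.
have := natpow_aux X (X * (X - 1)).
have -> : (X + X * (X - 1) = X * X)%N by rewrite mulnBr muln1 subnKC // leq_pmulr.
set P := (X ^ (X * (X - 1)))%N; set Q := ((X + 1) ^ (X * (X - 1)))%N.
rewrite expnS -/P => h; nia.
Qed.

Lemma archnormE n : archnorm n = ((absz n)%:R : RR).
Proof. by rewrite /archnorm maxrN -intr_norm -abszE. Qed.

Lemma ex_min (P : nat -> Prop) : (exists n, P n) ->
  exists n, P n /\ forall m, (m < n)%N -> ~ P m.
Proof.
move=> [n Pn]; apply: NNPP => hno.
have : forall k m, (m <= k)%N -> ~ P m.
  elim=> [|k IH] m hm Pm.
    apply: hno; exists m; split => // m' hm'; lia.
  apply: hno; exists m; split => // m' hm'; apply: IH; lia.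
by move/(_ n n (leqnn n)).
Qed.

Lemma padic_ge0 (p k : nat) : (0 : RR) <= (p%:R : RR) ^- k.
Proof. by rewrite invr_ge0 exprn_ge0 // ler0n. Qed.

Lemma padic_gt0 (p k : nat) : (0 < p)%N -> (0 : RR) < (p%:R : RR) ^- k.
Proof. by move=> p0; rewrite invr_gt0 exprn_gt0 // ltr0n. Qed.

Lemma preal (p i j k : nat) : prime p ->
  ((p%:R : RR) ^- i * (p%:R : RR) ^- j <= (p%:R : RR) ^- k) = (k <= i + j)%N.
Proof.
move=> pr; have p1 : (1 : RR) < p%:R by rewrite ltr1n prime_gt1.
have p0 : (0 : RR) < p%:R by apply: lt_trans p1; exact: ltr01.
rewrite -invfM -exprD lef_pV2 ?ler_eXn2l // posrE exprn_gt0 //.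
Qed.

Ltac fin := rewrite ?A_mul0 ?Amulr0 ?A_mul1 ?Amulr1 ?mul0r ?mulr0 ?mul1r ?mulr1;
  split=> ?; first [ exact: Ale0 | exact: A_le_refl | exact: A_pos | exact: ler01
   | exact: lexx | done | (exfalso; apply: A10; eassumption)
   | (exfalso; match goal with H : is_true (_ <= _) |- _ => by rewrite ler10 in H end) ].

Section Seminorm.
Variable R : TOAura.
Variable s : int -> R.
Hypothesis gs : gen_seminorm R s.
Hypothesis ms : Defs.multiplicative R s.

Lemma s0 : s 0 = A_zero R. Proof. by case: gs. Qed.
Lemma s1 : s 1 = A_one R. Proof. by case: gs => _ []. Qed.
Lemma sD a b : A_le R (s (a + b)) (A_add R (s a) (s b)).
Proof. by case: gs => _ [] _ []. Qed.

Lemma sN1 : s (-1) = A_one R.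
Proof.
have h : A_mul R (s (-1)) (s (-1)) = A_one R by rewrite -ms mulrNN mulr1 s1.
case: (A_le_total R (s (-1)) (A_one R)) => hx.
  apply: A_le_anti => //; rewrite -h.
  have := Ale_mull _ _ _ (s (-1)) hx; by rewrite Amulr1.
apply: A_le_anti => //; rewrite -h.
have := Ale_mull _ _ _ (s (-1)) hx; by rewrite Amulr1.
Qed.

Lemma sN n : s (- n) = s n.
Proof. by rewrite -mulN1r ms sN1 A_mul1. Qed.

Lemma s_abs n : s n = s (Posz (absz n)).
Proof. by case: n => // n; rewrite NegzE sN. Qed.

Lemma s_nat (n : nat) : A_le R (s n) (A_nat R n).
Proof.
elim: n => [|n IH]; first by rewrite s0; apply: A_le_refl.
rewrite -addn1 PoszD AnatD Anat1.
apply: A_le_trans (sD _ _) _; rewrite s1; apply: A_le_add IH.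
Qed.

Lemma s_pow x k : s (x ^+ k) = A_pow R (s x) k.
Proof. elim: k => [|k IH]; first by rewrite expr0 s1. by rewrite exprS ms IH. Qed.

Lemma s_neq0 n : s n <> A_zero R -> n != 0.
Proof. by move=> h; apply/eqP => e; apply: h; rewrite e s0. Qed.

Section Base.
Variable m : nat.
Hypothesis m1 : (0 < m)%N.
Variable M : R.
Hypothesis M1 : A_le R (A_one R) M.
Hypothesis sm : A_le R (s m) M.

Lemma s_base L (N : nat) : (N < m ^ L.+1)%N ->
  A_le R (s N) (A_mul R (A_nat R (muln L.+1 m)) (A_pow R M L)).
Proof.
elim: L N => [|L IH] N hN.
  rewrite Apow0 Amulr1 mul1n; apply: A_le_trans (s_nat N) _; apply: Anat_le.
  by rewrite expn1 in hN; apply: ltnW.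
have e : N = ((N %/ m) * m + N %% m)%N by rewrite -divn_eq.
have hq : (N %/ m < m ^ L.+1)%N by rewrite ltn_divLR // -expnSr.
rewrite e PoszD PoszM.
apply: A_le_trans (sD _ _) _.
rewrite ms mulSn AnatD A_mulDl A_addC.
apply: Ale_add2.
  apply: A_le_trans (s_nat _) _.
  rewrite -[X in A_le _ X _]Amulr1; apply: Ale_mul2.
    by apply: Anat_le; apply: ltnW; rewrite ltn_mod.
  exact: Apow_ge1.
rewrite ApowS (A_mulC R M) A_mulA; apply: Ale_mul2 => //.
exact: IH.
Qed.
End Base.

Hypothesis temp : tempered R.

Lemma s_key (m : nat) M (n A B : nat) : (1 < m)%N ->
  A_le R (A_one R) M -> A_le R (s m) M -> (n ^ A <= m ^ B)%N ->
  A_le R (A_pow R (s n) A) (A_pow R M B).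
Proof.
move=> m2 M1 sm hnm; have m0 : (0 < m)%N by apply: ltnW.
have MB0 : A_pow R M B <> A_zero R.
  move=> e; apply: (A10 R); rewrite -e; exact: Apow_ge1.
have [y hy] := Ainv _ _ MB0.
set x := A_mul R (A_pow R (s n) A) y.
have hx : A_le R x (A_one R).
  apply: (temp [:: m; muln m B]); first by rewrite /= -lt0n m0.
  move=> k; rewrite AevalP2.
  have hb : (n ^ (A * k) < m ^ (B * k).+1)%N.
    rewrite expnS !expnM; apply: leq_ltn_trans (leq_pow2 _ _ k hnm) _.
    rewrite -[X in (X < _)%N]mul1n ltn_mul2r; apply/andP; split => //.
    by rewrite expn_gt0 expn_gt0 m0.
  have := @s_base m m0 M M1 sm _ _ hb.
  rewrite PoszX s_pow ApowMn => h.
  rewrite /x ApowM.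
  apply: A_le_trans (A_le_mul _ _ _ _ h) _.
  rewrite -A_mulA ApowMn -ApowM hy Apow1 Amulr1.
  apply: Anat_le; rewrite mulSn mulnC mulnA; exact: leqnn.
have := A_le_mul _ _ _ (A_pow R M B) hx.
by rewrite A_mul1 /x -A_mulA (A_mulC R y) hy Amulr1.
Qed.


Lemma Anat2 x : A_mul R (A_nat R 2) x = A_add R x x.
Proof. by rewrite AnatS Anat1 A_mulDl A_mul1. Qed.

Lemma s_coprime (a b : int) : coprimez a b -> (forall n, A_le R (s n) (A_one R)) ->
  ~ A_le R (A_one R) (s a) -> ~ A_le R (A_one R) (s b) -> False.
Proof.
move=> cab hle ha hb.
have [t [hat [hbt ht]]] : exists t, A_le R (s a) t /\ A_le R (s b) t /\ ~ A_le R (A_one R) t.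
  case: (A_le_total R (s a) (s b)) => h.
    by exists (s b); split => //; split => //; apply: A_le_refl.
  by exists (s a); split; [apply: A_le_refl | split].
have key : forall k, A_le R (A_one R) (A_mul R (A_nat R 2) (A_pow R t k)).
  move=> k.
  have ck : coprimez (a ^+ k) (b ^+ k) by apply: coprimezXl; apply: coprimezXr.
  have [u [v e]] := Bezoutz (a ^+ k) (b ^+ k).
  move: ck; rewrite /coprimez => /eqP g; rewrite g in e.
  rewrite -s1 -e Anat2.
  apply: A_le_trans (sD _ _) _.
  rewrite !ms !s_pow; apply: Ale_add2.
    rewrite -[X in A_le _ _ X]A_mul1; apply: Ale_mul2 => //; exact: Apow_le.
  rewrite -[X in A_le _ _ X]A_mul1; apply: Ale_mul2 => //; exact: Apow_le.
case: (classic (t = A_zero R)) => t0.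
  have := key 1%N; rewrite t0 /A_pow /= Amulr1 Amulr0; exact: A10.
have [y hy] := Ainv _ _ t0.
have hy1 : A_le R y (A_one R).
  apply: (temp [:: 2%N]) => // k; rewrite AevalP1.
  have := Ale_mull _ _ _ (A_pow R y k) (key k).
  rewrite Amulr1 A_mulC -A_mulA -ApowM hy Apow1 Amulr1 //.
apply: ht; have := Ale_mull _ _ _ t hy1; by rewrite hy Amulr1.
Qed.


Lemma caseA (n0 : nat) : (1 < n0)%N -> ~ A_le R (s n0) (A_one R) ->
  mequiv (A_mul R) (A_le R) s Rmul Rle_ archnorm.
Proof.
move=> n01 hn0.
have hgt : forall m, (1 < m)%N -> ~ A_le R (s m) (A_one R).
  move=> m m1 hm; apply: hn0.
  have := @s_key m (A_one R) n0 1 n0 m1 (A_le_refl _ _) hm.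
  rewrite expn1 Apow1 /A_pow /= Amulr1; apply; apply: ltnW; exact: ltn_expl.
have ge1 : forall m, (1 < m)%N -> A_le R (A_one R) (s m).
  by move=> m m1; case: (A_le_total R (s m) (A_one R)) => // /(hgt _ m1).
have mono_le : forall x y : nat, (x <= y)%N -> A_le R (s x) (s y).
  move=> x y hxy; case: (ltnP 1 y) => hy.
    have := @s_key y (s y) x 1 1 hy (ge1 _ hy) (A_le_refl _ _).
    by rewrite !expn1 /A_pow /= !Amulr1; apply.
  case: x hxy => [|x] hxy; first by rewrite s0; exact: Ale0.
  have -> : y = x.+1 by lia.
  exact: A_le_refl.
have mono_lt : forall x y : nat, (x < y)%N -> ~ A_le R (s y) (s x).
  move=> x y hxy hyx.
  case: x hxy hyx => [|[|x]] hxy hyx.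
  - rewrite s0 in hyx.
    case: (ltnP 1 y) => hy.
      apply: (hgt _ hy); apply: A_le_trans hyx (A_pos R).
    have e : y = 1%N by lia.
    by move: hyx; rewrite e s1; apply: A10.
  - by apply: (hgt y) => //; rewrite -s1.
  - have [A hA] := @pow_gap x.+2 y isT hxy.
    have y1 : (1 < y)%N by lia.
    have := @s_key y (s y) x.+2 A.+1 A y1 (ge1 _ y1) (A_le_refl _ _) hA.
    move=> h; have h2 := A_le_trans _ _ _ _ h (Apow_le _ _ _ A hyx).
    have sx0 : s x.+2 <> A_zero R.
      by move=> e; apply: (hgt x.+2) => //; rewrite e; exact: A_pos.
    apply: (hgt x.+2) => //.
    apply: (Acancel _ _ _ _ (Apow_neq0 _ _ A sx0)).
    by rewrite A_mul1 -ApowS.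
move=> a b c.
rewrite -ms (s_abs (a * c)) (s_abs b) abszM /Rle_ /Rmul !archnormE -natrM ler_nat.
split.
  move=> h; case: leqP => // lt; exfalso; exact: mono_lt lt h.
exact: mono_le.
Qed.

Lemma caseB : (forall n : int, A_le R (s n) (A_one R)) ->
  (exists p : nat, prime p /\ mequiv (A_mul R) (A_le R) s Rmul Rle_ (padic p)) \/
  (exists p : nat, prime p /\ mequiv (A_mul R) (A_le R) s Bmul Ble (presidual p)) \/
  mequiv (A_mul R) (A_le R) s Rmul Rle_ trivnorm.
Proof.
move=> hle.
case: (classic (exists n : nat, (0 < n)%N /\ ~ A_le R (A_one R) (s n))) => [hex|hno]; last first.
  right; right.
  have hs : forall n : int, s n = if n == 0 then A_zero R else A_one R.
    move=> n; case: eqP => [->|/eqP n0]; first exact: s0.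
    apply: A_le_anti; first exact: hle.
    rewrite s_abs; case: (classic (A_le R (A_one R) (s (absz n)))) => // h.
    exfalso; apply: hno; exists (absz n); split => //; by rewrite absz_gt0.
  move=> a b c; rewrite !hs /trivnorm /Rle_ /Rmul.
  by case: (a == 0); case: (b == 0); case: (c == 0); fin.
have [p [[p0 hp] pmin]] := @ex_min _ hex.
have hpm1 : forall m : nat, (0 < m)%N -> (m < p)%N -> s m = A_one R.
  move=> m m0 mp; apply: A_le_anti; first exact: hle.
  case: (classic (A_le R (A_one R) (s m))) => // h.
  by exfalso; apply: (pmin m mp).
have pr : prime p.
  case: (boolP (prime p)) => // /primePn [hlt | [d /andP [d1 dp] dd]]; exfalso.
    have e : p = 1%N by lia.
    by apply: hp; rewrite e s1; apply: A_le_refl.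
  apply: hp; rewrite -(divnK dd) PoszM ms.
  have d0 : (0 < d)%N by lia.
  have q0 : (0 < p %/ d)%N by rewrite divn_gt0 // (dvdn_leq p0 dd).
  have qp : (p %/ d < p)%N by rewrite ltn_Pdiv.
  rewrite (hpm1 _ q0 qp) (hpm1 d d0 dp) A_mul1; exact: A_le_refl.
have hcop : forall m : nat, ~~ (p %| m)%N -> s m = A_one R.
  move=> m hm; apply: A_le_anti; first exact: hle.
  case: (classic (A_le R (A_one R) (s m))) => // h; exfalso.
  apply: (@s_coprime p m) => //.
  by rewrite coprimezE /= prime_coprime.
have hval : forall n : int, n != 0 -> s n = A_pow R (s p) (logn p (absz n)).
  move=> n n0; rewrite s_abs.
  have n0p : (0 < absz n)%N by rewrite absz_gt0.
  have [m cm e] := pfactor_coprime pr n0p.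
  rewrite {1}e PoszM ms PoszX s_pow hcop; first exact: A_mul1.
  by rewrite -prime_coprime.
case: (classic (s p = A_zero R)) => sp0.
  right; left; exists p; split => //.
  have hs : forall n : int, s n = if presidual p n then A_one R else A_zero R.
    move=> n; rewrite /presidual; case: (boolP (p %| absz n)%N) => /= h.
      by rewrite s_abs -(divnK h) PoszM ms sp0 Amulr0.
    by rewrite s_abs hcop.
  move=> a b c; rewrite !hs /Ble /Bmul.
  by case: (presidual p a); case: (presidual p b); case: (presidual p c); fin.
left; exists p; split => //.
have [t et] : exists t, t = s p by eexists.
rewrite -et in hp sp0 hval.
have hs : forall n : int, s n = if n == 0 then A_zero R else A_pow R t (logn p (absz n)).
  move=> n; case: eqP => [->|/eqP n0]; [exact: s0 | exact: hval].
move=> a b c; rewrite !hs /Rle_ /Rmul /padic.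
case: (a == 0).
  rewrite A_mul0 mul0r; split => _; last exact: Ale0.
  case: (b == 0) => //; exact: padic_ge0.
case: (c == 0).
  rewrite Amulr0 mulr0; split => _; last exact: Ale0.
  case: (b == 0) => //; exact: padic_ge0.
case: (b == 0).
  split => h; exfalso.
    have e : A_mul R (A_pow R t (logn p `|a|)) (A_pow R t (logn p `|c|)) = A_zero R.
      by apply: A_le_anti h (Ale0 _ _).
    by case: (Amul_eq0 _ _ _ e) => ee; exact: (Apow_neq0 _ _ _ sp0 ee).
  move: h; rewrite leNgt => /negP; apply.
  by rewrite mulr_gt0 // padic_gt0 // prime_gt0.
rewrite -ApowD Apow_strict // preal //.
Qed.

End Seminorm.

Definition evalR (P : seq nat) (n : nat) : RR :=
  foldr (fun a acc => a%:R + n%:R * acc) 0 P.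

Lemma evalR_bound P n : evalR P n <= (sumn P)%:R * (n.+1%:R) ^+ (size P).
Proof.
elim: P => [|a P IH] /=; first by rewrite mul0r.
set N : RR := n.+1%:R; set E := N ^+ size P.
have N1 : 1 <= N by rewrite /N ler1n.
have E1 : 1 <= E by apply: exprn_ege1.
have nN : (n%:R : RR) <= N by rewrite /N ler_nat.
have v0 : 0 <= evalR P n.
  elim: P {IH E E1} => [|b P IH2] /=; first exact: lexx.
  by apply: addr_ge0; [exact: ler0n | apply: mulr_ge0 => //; exact: ler0n].
have a0 : (0 : RR) <= a%:R by exact: ler0n.
have S0 : (0 : RR) <= (sumn P)%:R by exact: ler0n.
rewrite exprS natrD.
have n0 : (0 : RR) <= n%:R by exact: ler0n.
have h1 : (n%:R : RR) * evalR P n <= N * ((sumn P)%:R * E).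
  by apply: ler_pM => //; exact: mulr_ge0 (ler0n _ _) (le_trans ler01 E1).
have NE1 : 1 <= N * E by rewrite -[1]mulr1; apply: ler_pM => //; exact: ler01.
rewrite mulrDl; apply: lerD.
  by rewrite ler_peMr.
by rewrite mulrCA.
Qed.

Lemma bernoulli (x : RR) j : 1 <= x -> 1 + j%:R * (x - 1) <= x ^+ j.
Proof.
move=> x1; elim: j => [|j IH]; first by rewrite mul0r addr0 expr0.
rewrite exprS -natr1.
have h : 0 <= (j%:R : RR) by exact: ler0n.
have h2 := ler_wpM2l (le_trans ler01 x1) IH.
have h3 : 0 <= (j%:R : RR) * ((x - 1) * (x - 1)) by apply: mulr_ge0 => //; nra.
move: h2 h3; set X := x ^+ j => h2 h3.
nra.
Qed.

Lemma tempR (P : seq nat) (x : RR) : 0 <= x ->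
  (forall n, x ^+ n <= evalR P n) -> x <= 1.
Proof.
move=> x0 H; case: (lerP x 1) => // x1; exfalso.
set h := x - 1; have h0 : 0 < h by rewrite /h subr_gt0.
set d := size P; set e := d.+1; set K : RR := (sumn P)%:R.
have K0 : 0 <= K by exact: ler0n.
set C := K * ((2 * e)%N%:R) ^+ d / h ^+ e.
have C0 : 0 <= C by apply: divr_ge0; [apply: mulr_ge0 => //; apply: exprn_ge0; exact: ler0n | apply: exprn_ge0; exact: ltW].
set j := (Num.Def.archi_bound C).+1.
have Cj : C < j%:R.
  apply: lt_le_trans (archi_boundP C0) _; rewrite ler_nat; exact: leqnSn.
have j0 : (0 : RR) < j%:R by rewrite ltr0n.
have hj : 0 <= j%:R * h by apply: mulr_ge0; [exact: ltW | exact: ltW].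
have low : (j%:R * h) ^+ e <= x ^+ (j * e).
  rewrite exprM; apply: (@le_trans _ _ ((1 + j%:R * h) ^+ e)).
    apply: lerXn2r; rewrite ?nnegrE //; last lra.
    by apply: addr_ge0 => //; exact: ler01.
  apply: lerXn2r; rewrite ?nnegrE; first by apply: addr_ge0 => //; exact: ler01.
    by apply: exprn_ge0.
  by apply: bernoulli; exact: ltW.
have up : x ^+ (j * e) <= K * ((2 * e)%N%:R) ^+ d * (j%:R) ^+ d.
  apply: le_trans (H _) _; apply: le_trans (evalR_bound _ _) _.
  rewrite -/d -/K -mulrA; apply: ler_wpM2l => //.
  rewrite -exprMn; apply: lerXn2r; rewrite ?nnegrE; [exact: ler0n | by apply: mulr_ge0; exact: ler0n |].
  rewrite -natrM ler_nat; rewrite /e.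
  have : (0 < j)%N by [].
  nia.
have := le_trans low up.
rewrite exprMn exprS -/e [X in X * _ <= _]mulrC -!mulrA [X in _ <= X]mulrC.
have jd0 : 0 < (j%:R : RR) ^+ d by apply: exprn_gt0.
rewrite (mulrC ((2 * e)%N%:R ^+ d)) -mulrA ler_pM2l // => hh.
have he : 0 < h ^+ e by apply: exprn_gt0.
move: Cj; rewrite /C ltr_pdivrMr // => Cj.
by have := lt_le_trans Cj hh; rewrite mulrC ltxx.
Qed.

Definition Rpt := {x : RR | 0 <= x}.
Lemma Rp_inj (a b : Rpt) : sval a = sval b -> a = b.
Proof. case: a b => [x hx] [y hy] /= e; subst y; congr exist; exact: bool_irrelevance. Qed.

Definition Rp0 : Rpt := exist _ 0 (lexx 0).
Definition Rp1 : Rpt := exist _ 1 ler01.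
Definition Rpadd (a b : Rpt) : Rpt := exist _ (sval a + sval b) (addr_ge0 (svalP a) (svalP b)).
Definition Rpmul (a b : Rpt) : Rpt := exist _ (sval a * sval b) (mulr_ge0 (svalP a) (svalP b)).
Definition Rple (a b : Rpt) : Prop := sval a <= sval b.

Lemma inv_ge0 (x : RR) : 0 <= x -> 0 <= x^-1.
Proof. by rewrite invr_ge0. Qed.

Lemma Rp_inv (a : Rpt) : a <> Rp0 -> exists b, Rpmul a b = Rp1.
Proof.
move=> h; have a0 : sval a != 0 by apply/eqP => e; apply: h; exact: Rp_inj.
exists (exist _ (sval a)^-1 (@inv_ge0 (sval a) (svalP a))).
by apply: Rp_inj; rewrite /= mulfV.
Qed.

Definition RpA : TOAura.
refine (@Build_TOAura Rpt Rp0 Rp1 Rpadd Rpmul Rple _ _ _ _ _ _ _ _ _ Rp_inv _ _ _ _ _ _ _).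
- by move=> a b c; apply: Rp_inj; rewrite /= addrA.
- by move=> a b; apply: Rp_inj; rewrite /= addrC.
- by move=> a; apply: Rp_inj; rewrite /= add0r.
- by move=> a b c; apply: Rp_inj; rewrite /= mulrA.
- by move=> a b; apply: Rp_inj; rewrite /= mulrC.
- by move=> a; apply: Rp_inj; rewrite /= mul1r.
- by move=> a b c; apply: Rp_inj; rewrite /= mulrDl.
- by move=> a; apply: Rp_inj; rewrite /= mul0r.
- by move=> e; have := f_equal sval e => /= /eqP; rewrite oner_eq0.
- by move=> a; rewrite /Rple.
- by move=> a b c; rewrite /Rple; apply: le_trans.
- by move=> a b h1 h2; apply: Rp_inj; apply: le_anti; rewrite h1 h2.
- by move=> a b; rewrite /Rple; case: (lerP (sval a) (sval b)) => h; [left | right; apply: ltW].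
- by move=> a b c; rewrite /Rple /= lerD2r.
- by move=> a b c h; rewrite /Rple /=; apply: ler_wpM2r => //; exact: (svalP c).
- by rewrite /Rple /= ler01.
Defined.

Lemma Rp_pow (x : RpA) n : sval (A_pow RpA x n) = (sval x) ^+ n.
Proof. elim: n => [|n IH] //=; by rewrite exprS -IH. Qed.
Lemma Rp_nat n : sval (A_nat RpA n) = n%:R.
Proof. elim: n => [|n IH] //=; by rewrite IH nat1r. Qed.
Lemma Rp_eval P n : sval (A_evalP RpA P n) = evalR P n.
Proof. elim: P => [|a P IH] //=; by rewrite -IH Rp_nat Rp_nat. Qed.

Lemma Rp_tempered : tempered RpA.
Proof.
move=> P x _ H; rewrite /A_le /= /Rple /=.
apply: (@tempR P (sval x) (svalP x)) => n; rewrite -Rp_eval -Rp_pow; exact: H.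
Qed.

Definition toRp (f : int -> RR) (hf : forall n, 0 <= f n) : int -> RpA :=
  fun n => exist _ (f n) (hf n).

Lemma Rp_speh (f : int -> RR) (hf : forall n, 0 <= f n) :
  f 0 = 0 -> f 1 = 1 -> (forall a b, f (a + b) <= f a + f b) ->
  (forall a b, f (a * b) = f a * f b) -> in_Speh_m Rmul Rle_ f.
Proof.
move=> f0 f1 fD fM; exists RpA, (@toRp f hf); split; first exact: Rp_tempered.
split.
  split; first by apply: Rp_inj; rewrite /= f0.
  split; first by apply: Rp_inj; rewrite /= f1.
  split; first by move=> a b; exact: fD.
  by move=> a b; rewrite /A_le /= /Rple /= fM.
split; first by move=> a b; apply: Rp_inj; rewrite /= fM.
by move=> a b c.
Qed.

Definition BA : TOAura.
refine (@Build_TOAura bool false true orb andb Ble _ _ _ _ _ _ _ _ _ _ _ _ _ _ _ _ _).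
- by case; case; case.
- by case; case.
- by [].
- by case; case; case.
- by case; case.
- by [].
- by case; case; case.
- by [].
- by [].
- by case => // _; exists true.
- by case.
- by rewrite /Ble; case; case; case.
- by rewrite /Ble; case; case.
- by rewrite /Ble; case; case; [left|right|left|left].
- by case; case; case.
- by case; case; case.
- by [].
Defined.

Lemma BA_tempered : tempered BA.
Proof. by move=> P x _ _; case: x. Qed.

Lemma absz_add_le (a b : int) : leq (absz (a + b)) (addn (absz a) (absz b)).
Proof. by have := ler_normD a b; rewrite -!abszE -PoszD lez_nat. Qed.

Lemma pres_mul p a b : prime p -> presidual p (a * b) = presidual p a && presidual p b.
Proof. by move=> pr; rewrite /presidual abszM Euclid_dvdM // negb_or. Qed.

Lemma pres_add p a b : presidual p (a + b) ==> (presidual p a || presidual p b).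
Proof.
rewrite /presidual -negb_and; apply/implyP; apply: contra => /andP [ha hb].
have ha' : a \in dvdz (Posz p) by rewrite dvdzE.
have hb' : b \in dvdz (Posz p) by rewrite dvdzE.
by have := rpredD ha' hb'; rewrite dvdzE.
Qed.

Lemma padic_nz p n : n != 0 -> padic p n = (p%:R : RR) ^- (logn p (absz n)).
Proof. by move=> h; rewrite /padic (negbTE h). Qed.

Lemma padic_ge0' p n : 0 <= padic p n.
Proof. rewrite /padic; case: (n == 0) => //; exact: padic_ge0. Qed.

Lemma padic_mul p a b : prime p -> padic p (a * b) = padic p a * padic p b.
Proof.
move=> pr; case: (eqVneq a 0) => [->|a0]; first by rewrite mul0r /padic eqxx mul0r.
case: (eqVneq b 0) => [->|b0]; first by rewrite mulr0 /padic eqxx mulr0.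
have ab0 : a * b != 0 by rewrite mulf_neq0.
rewrite !padic_nz // abszM lognM ?absz_gt0 // exprD invfM //.
Qed.

Lemma padic_le p i k : prime p -> (k <= i)%N -> (p%:R : RR) ^- i <= (p%:R : RR) ^- k.
Proof.
move=> pr h; have := preal p i 0 k pr; rewrite expr0 invr1 mulr1 addn0 => ->; exact: h.
Qed.

Lemma padic_add p a b : prime p -> padic p (a + b) <= padic p a + padic p b.
Proof.
move=> pr; case: (eqVneq (a + b) 0) => [->|ab0].
  by rewrite {1}/padic eqxx; apply: addr_ge0; exact: padic_ge0'.
case: (eqVneq a 0) => [a0|a0].
  by rewrite a0 add0r {2}/padic eqxx add0r.
case: (eqVneq b 0) => [b0|b0].
  by rewrite b0 addr0 {3}/padic eqxx addr0.
rewrite !padic_nz //.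
set va := logn p `|a|; set vb := logn p `|b|.
have key : forall v, (v <= va)%N -> (v <= vb)%N -> leq v (logn p (absz (a + b))).
  move=> v hva hvb.
  have ha : a \in dvdz (Posz (p ^ v)%N).
    rewrite dvdzE /= (pfactor_dvdn _ pr) // absz_gt0 //.
  have hb : b \in dvdz (Posz (p ^ v)%N).
    rewrite dvdzE /= (pfactor_dvdn _ pr) // absz_gt0 //.
  have := rpredD ha hb; rewrite dvdzE /= (pfactor_dvdn _ pr) // absz_gt0 //.
have pa0 := padic_ge0 p va; have pb0 := padic_ge0 p vb.
case: (leqP va vb) => h.
  by apply: le_trans (padic_le _ _ _ pr (key va (leqnn _) h)) _; rewrite lerDl.
by apply: le_trans (padic_le _ _ _ pr (key vb (ltnW h) (leqnn _))) _; rewrite lerDr.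
Qed.

Lemma triv_ge0 n : 0 <= trivnorm n.
Proof. by rewrite /trivnorm; case: (n == 0). Qed.
Lemma triv_mul a b : trivnorm (a * b) = trivnorm a * trivnorm b.
Proof.
by rewrite /trivnorm mulf_eq0; case: (a == 0); case: (b == 0); rewrite ?mulr0 ?mul0r ?mulr1.
Qed.
Lemma triv_add a b : trivnorm (a + b) <= trivnorm a + trivnorm b.
Proof.
case: (eqVneq a 0) => [->|a0]; first by rewrite add0r {2}/trivnorm eqxx add0r.
case: (eqVneq b 0) => [->|b0]; first by rewrite addr0 {3}/trivnorm eqxx addr0.
rewrite {2}/trivnorm {2}/trivnorm (negbTE a0) (negbTE b0) /trivnorm.
case: (_ == 0); lra.
Qed.

Lemma mequiv_sym {T1 T2 : Type} m1 l1 (f1 : int -> T1) m2 l2 (f2 : int -> T2) :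
  mequiv m1 l1 f1 m2 l2 f2 -> mequiv m2 l2 f2 m1 l1 f1.
Proof. by move=> h a b c; split => /(h a b c). Qed.

Lemma mequiv_trans {T1 T2 T3 : Type} m1 l1 (f1 : int -> T1) m2 l2 (f2 : int -> T2)
  m3 l3 (f3 : int -> T3) :
  mequiv m1 l1 f1 m2 l2 f2 -> mequiv m2 l2 f2 m3 l3 f3 -> mequiv m1 l1 f1 m3 l3 f3.
Proof. by move=> h1 h2 a b c; split => [/(h1 a b c)/(h2 a b c)|/(h2 a b c)/(h1 a b c)]. Qed.

Lemma classify (R : TOAura) (s : int -> R) :
  tempered R -> gen_seminorm R s -> Defs.multiplicative R s ->
     (exists p : nat, prime p /\ mequiv (A_mul R) (A_le R) s Rmul Rle_ (padic p)) \/
     (exists p : nat, prime p /\ mequiv (A_mul R) (A_le R) s Bmul Ble (presidual p)) \/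
     mequiv (A_mul R) (A_le R) s Rmul Rle_ trivnorm \/
     mequiv (A_mul R) (A_le R) s Rmul Rle_ archnorm.
Proof.
move=> temp gs ms.
case: (classic (exists n : nat, (1 < n)%N /\ ~ A_le R (s n) (A_one R))) => [[n0 [n01 hn0]]|hno].
  by right; right; right; exact: (@caseA _ _ gs ms temp _ n01 hn0).
have hle : forall n : int, A_le R (s n) (A_one R).
  move=> n; rewrite (@s_abs _ _ gs ms); case: (absz n) => [|[|k]].
  - rewrite (@s0 _ _ gs); exact: Ale0.
  - rewrite (@s1 _ _ gs); exact: A_le_refl.
  - case: (A_le_total R (s k.+2) (A_one R)) => // h.
    case: (classic (A_le R (s k.+2) (A_one R))) => // h2.
    by exfalso; apply: hno; exists k.+2.
case: (@caseB _ _ gs ms temp hle) => [h|[h|h]].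
- by left.
- by right; left.
- by right; right; left.
Qed.

Lemma padic0 p : padic p 0 = 0. Proof. by rewrite /padic eqxx. Qed.
Lemma padic1 p : padic p 1 = 1. Proof. by rewrite /padic oner_eq0 logn1 expr0 invr1. Qed.

Lemma arch_ge0 n : 0 <= archnorm n. Proof. by rewrite archnormE ler0n. Qed.
Lemma arch0 : archnorm 0 = 0. Proof. by rewrite archnormE. Qed.
Lemma arch1 : archnorm 1 = 1. Proof. by rewrite archnormE. Qed.
Lemma arch_add a b : archnorm (a + b) <= archnorm a + archnorm b.
Proof. by rewrite !archnormE -natrD ler_nat absz_add_le. Qed.
Lemma arch_mul a b : archnorm (a * b) = archnorm a * archnorm b.
Proof. by rewrite !archnormE abszM natrM. Qed.

Lemma triv0 : trivnorm 0 = 0. Proof. by rewrite /trivnorm eqxx. Qed.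
Lemma triv1 : trivnorm 1 = 1. Proof. by rewrite /trivnorm oner_eq0. Qed.

Definition resR (p : nat) (n : int) : RR := if presidual p n then 1 else 0.

Lemma pres0 p : presidual p 0 = false. Proof. by rewrite /presidual dvdn0. Qed.
Lemma pres1 p : prime p -> presidual p 1 = true.
Proof. by move=> pr; rewrite /presidual /= dvdn1; case: eqP pr => // ->. Qed.

Lemma resR_MZ p : prime p -> in_MZ (resR p).
Proof.
move=> pr; split; first by move=> n; rewrite /resR; case: presidual.
split; first by rewrite /resR pres0.
split; first by rewrite /resR pres1.
split.
  move=> a b; have := pres_add p a b; rewrite /resR.
  by case: (presidual p (a + b)); case: (presidual p a); case: (presidual p b) => //= _; lra.
move=> a b; rewrite /resR pres_mul //.
by case: (presidual p a); case: (presidual p b); rewrite ?mulr0 ?mul0r ?mulr1.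
Qed.

Lemma resR_equiv p : mequiv Rmul Rle_ (resR p) Bmul Ble (presidual p).
Proof.
move=> a b c; rewrite /resR /Rle_ /Rmul /Ble /Bmul.
by case: (presidual p a); case: (presidual p b); case: (presidual p c); fin.
Qed.

Import Pilot.Defs.

Theorem proposition3p10 :
  (* every tempered multiplicative generalized seminorm on Z is equivalent to one in the list *)
  (forall (R : TOAura) (s : int -> R),
     tempered R -> gen_seminorm R s -> multiplicative R s ->
     (exists p : nat, prime p /\ mequiv (A_mul R) (A_le R) s Rmul Rle_ (padic p)) \/
     (exists p : nat, prime p /\ mequiv (A_mul R) (A_le R) s Bmul Ble (presidual p)) \/
     mequiv (A_mul R) (A_le R) s Rmul Rle_ trivnorm \/
     mequiv (A_mul R) (A_le R) s Rmul Rle_ archnorm) /\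
  (* each listed place belongs to Speh^m(Z) *)
  (forall p : nat, prime p -> in_Speh_m Rmul Rle_ (padic p)) /\
  (forall p : nat, prime p -> in_Speh_m Bmul Ble (presidual p)) /\
  in_Speh_m Rmul Rle_ trivnorm /\
  in_Speh_m Rmul Rle_ archnorm /\
  (* M(Z) -> Speh^m(Z) is surjective *)
  (forall (R : TOAura) (s : int -> R),
     tempered R -> gen_seminorm R s -> multiplicative R s ->
     exists f : int -> RR, in_MZ f /\ mequiv Rmul Rle_ f (A_mul R) (A_le R) s).
Proof.
split; first exact: classify.
split.
  move=> p pr; apply: (@Rp_speh (padic p) (padic_ge0' p)).
  - exact: padic0.
  - exact: padic1.
  - by move=> a b; exact: padic_add.
  - by move=> a b; exact: padic_mul.
split.
  move=> p pr; exists BA, (presidual p); split; first exact: BA_tempered.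
  split.
    split; first exact: pres0.
    split; first exact: pres1.
    split.
      by move=> a b; have := pres_add p a b.
    by move=> a b; rewrite pres_mul //; rewrite /A_le /=; case: (presidual p a); case: (presidual p b).
  split; first by move=> a b; rewrite pres_mul.
  by move=> a b c.
split.
  apply: (@Rp_speh trivnorm triv_ge0); [exact: triv0 | exact: triv1 | exact: triv_add | exact: triv_mul].
split.
  apply: (@Rp_speh archnorm arch_ge0); [exact: arch0 | exact: arch1 | exact: arch_add | exact: arch_mul].
move=> R s temp gs ms.
case: (classify _ _ temp gs ms) => [[p [pr h]]|[[p [pr h]]|[h|h]]].
- exists (padic p); split; last exact: mequiv_sym h.
  split; first exact: padic_ge0'.
  split; first exact: padic0.
  split; first exact: padic1.
  by split => a b; [exact: padic_add | exact: padic_mul].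
- exists (resR p); split; first exact: resR_MZ.
  exact: (mequiv_trans _ _ _ _ _ _ _ _ _ (resR_equiv p) (mequiv_sym _ _ _ _ _ _ h)).
- exists trivnorm; split; last exact: mequiv_sym h.
  split; first exact: triv_ge0.
  split; first exact: triv0.
  split; first exact: triv1.
  by split => a b; [exact: triv_add | exact: triv_mul].
- exists archnorm; split; last exact: mequiv_sym h.
  split; first exact: arch_ge0.
  split; first exact: arch0.
  split; first exact: arch1.
  by split => a b; [exact: arch_add | exact: arch_mul].
Qed.
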